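(* Let $T=\{t_1,\ldots,t_N\}$ be documents, each containing at most $L$ distinct words from a dictionary $\{w_1,\ldots,w_D\}$ ($D\ge 2$). For a word $w$ let $\#(w)$ be the number of documents containing $w$ and for words $x,y$ let $\#(x,y)$ be the number of documents containing both. Fix $\epsilon\in(0,1]$ and $p=2\log D$. Consider the MapReduce mapper that, for every document $t$ and every unordered pair of distinct words $(w_i,w_j)$ in $t$, independently emits the key-value pair $((w_i,w_j)\to 1)$ with probability $\min\!\left(1,\frac{p}{\epsilon}\frac{1}{\sqrt{\#(w_i)}\sqrt{\#(w_j)}}\right)$ (CosineSampleEmit). Then the expected total number of emitted pairs (the shuffle size) is at most $\frac{p}{\epsilon}LD=O(DL\log(D)/\epsilon)$, independently of $N$. Moreover, this is tight up to the factor $\log(D)/\epsilon$: whenever $L\ge 2$ divides $D$, there is an input of this form with at least $(D/L)\binom{L}{2}=\Omega(DL)$ pairs of words having cosine similarity $1\ge\epsilon$, so any algorithm that outputs all pairs with cosine similarity at least $\epsilon$ (in particular a shuffle of CosineSampleEmit from which these are computed) must produce $\Omega(DL)$ output in the worst case.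
   Context: Cosine similarity of words $x,y$ is $\frac{\#(x,y)}{\sqrt{\#(x)}\sqrt{\#(y)}}$. The shuffle size is the total number of key-value pairs emitted by the mappers over all documents. $\log$ denotes the natural logarithm. *)

(* Defs.v *)
From HB Require Import structures.
From mathcomp Require Import all_boot all_order all_algebra.
From mathcomp Require Import reals exp.
Set Implicit Arguments. Unset Strict Implicit. Unset Printing Implicit Defensive.
Import Order.TTheory GRing.Theory Num.Theory.
Local Open Scope ring_scope.

(* Words are w_1..w_D, represented by 'I_D.  A corpus of N documents is a
   map docs : 'I_N -> {set 'I_D} (each document = its set of distinct words). *)

Definition cnt (D N : nat) (docs : 'I_N -> {set 'I_D}) (w : 'I_D) : nat :=
  #|[set k : 'I_N | w \in docs k]|.

Definition cnt2 (D N : nat) (docs : 'I_N -> {set 'I_D}) (x y : 'I_D) : nat :=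
  #|[set k : 'I_N | (x \in docs k) && (y \in docs k)]|.

Definition cosine (R : realType) (D N : nat) (docs : 'I_N -> {set 'I_D})
  (x y : 'I_D) : R :=
  (cnt2 docs x y)%:R / (Num.sqrt (cnt docs x)%:R * Num.sqrt (cnt docs y)%:R).

Definition emit_prob (R : realType) (D N : nat) (docs : 'I_N -> {set 'I_D})
  (p eps : R) (i j : 'I_D) : R :=
  Num.min 1 ((p / eps) / (Num.sqrt (cnt docs i)%:R * Num.sqrt (cnt docs j)%:R)).

(* Expected shuffle size: the total number of emitted key-value pairs is a sum
   of independent Bernoulli indicators, one per (document, unordered pair of
   distinct words in it); its expectation is the sum of emission
   probabilities.  Unordered pairs {w_i,w_j} are enumerated as i < j. *)
Definition expected_shuffle (R : realType) (D N : nat)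
  (docs : 'I_N -> {set 'I_D}) (p eps : R) : R :=
  \sum_(k < N) \sum_(i : 'I_D) \sum_(j : 'I_D |
      [&& (i < j)%N, i \in docs k & j \in docs k]) emit_prob docs p eps i j.

(* Main.v *)
Require Import Defs.
From HB Require Import structures.
From mathcomp Require Import all_boot all_order all_algebra.
From mathcomp Require Import reals exp.
From mathcomp Require Import zify ring lra.
Import Order.TTheory GRing.Theory Num.Theory.
Local Open Scope ring_scope.
Lemma cardB L : #|[set pr : 'I_L * 'I_L | (pr.1 < pr.2)%N]| = 'C(L, 2).
Proof.
rewrite -sum1_card.
rewrite (eq_bigl (fun pr : 'I_L * 'I_L => (pr.1 < pr.2)%N)); last by move=> pr; rewrite inE.
rewrite -(pair_big_dep xpredT (fun a b : 'I_L => (a < b)%N) (fun _ _ => 1%N)) /=.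
rewrite (exchange_big_dep xpredT) //=.
rewrite -bin2_sum big_mkord; apply: eq_bigr => b _.
rewrite big_mkcond /=.
rewrite -(big_mkord xpredT (fun a => if (a < b)%N then 1%N else 0%N)).
rewrite (big_cat_nat _ (n := b)) //=; last exact: ltnW.
rewrite big_nat_cond (eq_bigr (fun _ => 1%N)); last by move=> i /andP[/andP[_ ->]].
rewrite -big_nat_cond sum_nat_const_nat muln1 subn0.
rewrite big_nat_cond big1 ?addn0 // => i /andP[/andP[hi _] _]; by rewrite ltnNge hi.
Qed.

Section P2.
Variables (R : realType) (D L : nat) (hL : (0 < L)%N) (hdiv : (L %| D)%N).
Let m := (D %/ L)%N.
Lemma hD : D = (m * L)%N. Proof. by rewrite /m divnK. Qed.

Lemma mkw_lt (q : 'I_m) (a : 'I_L) : (q * L + a < D)%N.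
Proof.
rewrite hD; have := ltn_ord q; have := ltn_ord a. nia.
Qed.
Definition mkw (q : 'I_m) (a : 'I_L) : 'I_D := Ordinal (mkw_lt q a).

Lemma mkw_div q a : ((mkw q a) %/ L = q)%N.
Proof. by rewrite /= divnMDl // divn_small ?addn0. Qed.
Lemma mkw_mod q a : ((mkw q a) %% L = a)%N.
Proof. by rewrite /= modnMDl modn_small. Qed.

Definition bdocs (k : 'I_m) : {set 'I_D} := [set w : 'I_D | (w %/ L == k)%N].

Lemma bdocs_card k : (#|bdocs k| <= L)%N.
Proof.
rewrite -[X in (_ <= X)%N]card_ord.
apply: (@leq_card_in _ _ (fun w : 'I_D => Ordinal (ltn_pmod w hL))).
move=> x y; rewrite !inE => /eqP hx /eqP hy [] hm.
apply: val_inj => /=; rewrite (divn_eq x L) (divn_eq y L) hx hy hm //.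
Qed.

Lemma w_lt (x : 'I_D) : (x %/ L < m)%N.
Proof. by rewrite ltn_divLR // -hD. Qed.

Lemma cnt2_blk (x y : 'I_D) : (x %/ L = y %/ L)%N -> cnt2 bdocs x y = 1%N.
Proof.
move=> hxy; rewrite /cnt2.
have -> : [set k : 'I_m | (x \in bdocs k) && (y \in bdocs k)] = [set Ordinal (w_lt x)].
  by apply/setP => k; rewrite !inE -hxy andbb -val_eqE /= eq_sym.
by rewrite cards1.
Qed.

Lemma cnt_blk (x : 'I_D) : cnt bdocs x = 1%N.
Proof.
rewrite -(@cnt2_blk x x) //; rewrite /cnt /cnt2.
by apply: eq_card => k; rewrite !inE andbb.
Qed.

Lemma cos_blk (x y : 'I_D) : (x %/ L = y %/ L)%N -> cosine R bdocs x y = 1%R.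
Proof.
move=> h; rewrite /cosine cnt2_blk // !cnt_blk sqrtr1 mulr1 divr1 //.
Qed.

Lemma part2 : (m * 'C(L, 2) <=
         #|[set pr : 'I_D * 'I_D | (pr.1 < pr.2)%N &
              cosine R bdocs pr.1 pr.2 == 1%R]|)%N.
Proof.
pose f (t : 'I_m * ('I_L * 'I_L)) := (mkw t.1 t.2.1, mkw t.1 t.2.2).
pose B := [set pr : 'I_L * 'I_L | (pr.1 < pr.2)%N].
have -> : (m * 'C(L, 2) = #|setX [set: 'I_m] B|)%N.
  by rewrite cardsX cardsT card_ord cardB.
rewrite -(card_in_imset (f := f)); last first.
  move=> [q [a b]] [q' [a' b']] _ _ [h1 h2].
  have e1 : q = q' by apply: val_inj => /=; rewrite -(mkw_div q a) -(mkw_div q' a') /= h1.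
  have e2 : a = a' by apply: val_inj => /=; rewrite -(mkw_mod q a) -(mkw_mod q' a') /= h1.
  have e3 : b = b' by apply: val_inj => /=; rewrite -(mkw_mod q b) -(mkw_mod q' b') /= h2.
  by rewrite e1 e2 e3.
apply: subset_leq_card; apply/subsetP => pr /imsetP [[q [a b]]].
rewrite !inE /= => hab ->; rewrite /= cos_blk ?eqxx ?andbT ?ltn_add2l //.
by rewrite !mkw_div.
Qed.
End P2.
Section P1.
Variables (R : realType) (D L N : nat) (docs : 'I_N -> {set 'I_D}) (p eps : R).
Hypotheses (hp : 0 <= p) (he : 0 < eps) (hL : forall k, (#|docs k| <= L)%N).
Let c := p / eps.
Let f (i : 'I_D) : R := ((cnt docs i)%:R)^-1.

Lemma c_ge0 : 0 <= c. Proof. by rewrite /c divr_ge0 // ltW. Qed.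
Lemma f_ge0 i : 0 <= f i. Proof. by rewrite /f invr_ge0. Qed.

Lemma cnt_gt0 k i : i \in docs k -> (0 < cnt docs i)%N.
Proof. by move=> h; apply/card_gt0P; exists k; rewrite inE. Qed.

Lemma amgm (a b : R) : 0 < a -> 0 < b ->
  (a * b)^-1 <= (a ^+ 2)^-1 / 2 + (b ^+ 2)^-1 / 2.
Proof.
move=> ha hb; rewrite invfM -!exprVn.
set x := a^-1; set y := b^-1.
have : 0 <= (x - y)^+2 by apply: sqr_ge0.
move=> h; nra.
Qed.

Lemma hbound k i j : i \in docs k -> j \in docs k ->
  emit_prob docs p eps i j <= c / 2 * (f i + f j).
Proof.
move=> hi hj; rewrite /emit_prob.
rewrite ge_min; apply/orP; right.
have ni := cnt_gt0 _ _ hi; have nj := cnt_gt0 _ _ hj.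
set a := Num.sqrt (cnt docs i)%:R; set b := Num.sqrt (cnt docs j)%:R.
have ha : 0 < a by rewrite sqrtr_gt0 ltr0n.
have hb : 0 < b by rewrite sqrtr_gt0 ltr0n.
have fa : f i = (a ^+ 2)^-1 by rewrite /a sqr_sqrtr // ler0n.
have fb : f j = (b ^+ 2)^-1 by rewrite /b sqr_sqrtr // ler0n.
rewrite fa fb -/c.
have := amgm _ _ ha hb; have := c_ge0; set u := (a * b)^-1; set v := (a ^+ 2)^-1; set w := (b ^+ 2)^-1.
move=> h1 h2. have -> : c / 2 * (v + w) = c * (v / 2 + w / 2) by ring.
exact: ler_wpM2l.
Qed.

Lemma perdoc k :
  \sum_(i : 'I_D) \sum_(j : 'I_D | [&& (i < j)%N, i \in docs k & j \in docs k])
     emit_prob docs p eps i j <= c * L%:R * \sum_(i in docs k) f i.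
Proof.
have g0 : forall i j, 0 <= c / 2 * (f i + f j).
  by move=> i j; apply: mulr_ge0; [apply: divr_ge0; [exact: c_ge0|lra] | apply: addr_ge0; exact: f_ge0].
apply: (@le_trans _ _ (\sum_(i in docs k) \sum_(j in docs k) (c / 2 * (f i + f j)))).
  rewrite [X in _ <= X]big_mkcond /=; apply: ler_sum => i _; case: ifP => hi.
    rewrite [X in _ <= X]big_mkcond [X in X <= _]big_mkcond /=; apply: ler_sum => j _.
    case: (i < j)%N; case hj: (j \in docs k); rewrite ?hi /=; try exact: g0; try exact: lexx.
    exact: (hbound _ _ _ hi hj).
  by rewrite big_pred0 // => j; rewrite andbF.
have S2 : \sum_(i in docs k) \sum_(j in docs k) f j = \sum_(i in docs k) \sum_(j in docs k) f i.
  by rewrite exchange_big.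
have S1 : \sum_(i in docs k) \sum_(j in docs k) f i = (\sum_(i in docs k) f i) *+ #|docs k|.
  by rewrite -sumrMnl; apply: eq_bigr => i _; rewrite sumr_const.
have -> : \sum_(i in docs k) \sum_(j in docs k) (c / 2 * (f i + f j)) =
   c / 2 * (\sum_(i in docs k) \sum_(j in docs k) f i + \sum_(i in docs k) \sum_(j in docs k) f j).
  rewrite -big_split /= mulr_sumr; apply: eq_bigr => i _.
  by rewrite -big_split /= mulr_sumr.
rewrite S2 S1.
have F0 : 0 <= \sum_(i in docs k) f i by apply: sumr_ge0 => i _; exact: f_ge0.
have hc := c_ge0.
have hk : (#|docs k|%:R : R) <= L%:R by rewrite ler_nat.
set F := \sum_(i in docs k) f i.
rewrite -[F *+ _]mulr_natr.
set K := (#|docs k|%:R : R).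
have -> : c / 2 * (F * K + F * K) = (c * F) * K by field.
rewrite [c * _ * F]mulrAC; apply: ler_wpM2l => //; exact: mulr_ge0.
Qed.

Lemma total : \sum_(k < N) \sum_(i in docs k) f i <= D%:R.
Proof.
rewrite (exchange_big_dep xpredT) //=.
rewrite -[X in _ <= X]mulr1n -[in X in _ <= X](card_ord D) -sumr_const.
apply: ler_sum => i _.
rewrite sumr_const /f.
have -> : #|[pred k : 'I_N | i \in docs k]| = cnt docs i.
  by rewrite /cnt; apply: eq_card => k; rewrite inE.
case: (posnP (cnt docs i)) => [->|h]; first by rewrite invr0 mulr0n.
by rewrite -[_ *+ cnt docs i]mulr_natr mulVf // pnatr_eq0 -lt0n.
Qed.
End P1.

Theorem theorem2 (R : realType) (D L : nat) :
  (2 <= D)%N ->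
  (forall (N : nat) (docs : 'I_N -> {set 'I_D}) (eps : R),
      (forall k, (#|docs k| <= L)%N) ->
      0 < eps -> eps <= 1 ->
      expected_shuffle docs (2 * ln (D%:R : R)) eps
        <= (2 * ln (D%:R : R)) / eps * L%:R * D%:R)
  /\
  ((2 <= L)%N -> (L %| D)%N ->
    exists (N : nat) (docs : 'I_N -> {set 'I_D}),
      (forall k, (#|docs k| <= L)%N) /\
      (D %/ L * 'C(L, 2) <=
         #|[set pr : 'I_D * 'I_D | (pr.1 < pr.2)%N &
              cosine R docs pr.1 pr.2 == 1%R]|)%N).
Proof.
move=> hD2; split.
  move=> N docs eps hL he he1.
  have hp : 0 <= 2 * ln (D%:R : R).
    by rewrite mulr_ge0 // ln_ge0 // ler1n; apply: leq_trans hD2.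
  rewrite /expected_shuffle.
  apply: le_trans (ler_sum _ (fun k _ => @perdoc R D L N docs _ eps hp he hL k)) _.
  rewrite -mulr_sumr; apply: ler_wpM2l; last exact: total.
  by apply: mulr_ge0 => //; apply: divr_ge0 => //; apply: ltW.
move=> hL2 hdiv.
have hL : (0 < L)%N by apply: leq_trans hL2.
exists (D %/ L)%N, (bdocs D L); split; first exact: bdocs_card.
exact: part2.
Qed.
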